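(* Let $\rho=\sum_{i=0}^n\lambda_i|D_n^i\rangle\langle D_n^i|$ with $\lambda_i\ge0$, $\sum_i\lambda_i=1$, and let $1\le k\le n$. Suppose the linear system in the unknowns $(a_{0},\dots,a_{n})$ $$\sum_{i=0}^n a_{i}\frac{\binom{k}{s}\binom{n-k}{i-s}}{\binom{n}{i}}=\sum_{i=0}^n\lambda_i\frac{\binom{k}{s}\binom{n-k}{i-s}}{\binom{n}{i}},\qquad 0\le s\le k,$$ has a solution with $a_i\ge0$ for all $i$ and $(a_0,\dots,a_n)\ne(\lambda_0,\dots,\lambda_n)$. Then $L(\rho)\ge k+1$.
   Context: Convention: $\binom{m}{i}=0$ if $i<0$ or $i>m$. Dicke states: $|D_n^i\rangle=\binom{n}{i}^{-1/2}\sum_{s\in\{0,1\}^n,\ \sum_js_j=i}|s_1\rangle\otimes\cdots\otimes|s_n\rangle$. For $S\subseteq[n]$, $\rho_S$ is the partial trace of $\rho$ over qubits outside $S$; $\mathcal C(\rho,\mathcal S)=\{\sigma\text{ density matrix}:\sigma_S=\rho_S\ \forall S\in\mathcal S\}$; $\mathcal S$ determines $\rho$ if $\mathcal C(\rho,\mathcal S)=\{\rho\}$; $L(\rho)=\min_{\mathcal S\text{ determines }\rho}\max_{S\in\mathcal S}|S|$. *)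

(* Defs.v *)
From HB Require Import structures.
From mathcomp Require Import all_boot all_order all_algebra.
From mathcomp Require Import boolp reals complex.
Set Implicit Arguments. Unset Strict Implicit. Unset Printing Implicit Defensive.
Import Order.TTheory GRing.Theory Num.Theory.
Local Open Scope ring_scope.

(* computational basis of n qubits: bit strings s = (s_1,...,s_n) *)
Definition bits (n : nat) := {ffun 'I_n -> bool}.

(* operators on (C^2)^{\otimes n}, written in the computational basis:
   A x y = <x|A|y> *)
Definition op (R : realType) (n : nat) := bits n -> bits n -> R[i].

Definition is_density (R : realType) (n : nat) (A : op R n) : Prop :=
  (forall x y, A y x = (A x y)^*) /\
  (forall v : bits n -> R[i], 0 <= \sum_(x : bits n) \sum_(y : bits n) (v x)^* * A x y * v y) /\
  \sum_(x : bits n) A x x = 1.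

Definition merge (n : nat) (S : {set 'I_n}) (x z : bits n) : bits n :=
  [ffun i => if i \in S then x i else z i].

(* partial trace over the qubits outside S.  rho_S is represented as a
   function on pairs of full bit strings which only depends on the bits in S:
   rho_S x y = sum over assignments z of the qubits outside S of
   <x|_S <z| rho |y>_S |z>. *)
Definition ptrace (R : realType) (n : nat) (S : {set 'I_n}) (A : op R n) : op R n :=
  fun x y => \sum_(z : bits n | [forall i, (i \in S) ==> ~~ z i])
               A (merge S x z) (merge S y z).

Definition determines (R : realType) (n : nat) (A : op R n) (F : {set {set 'I_n}}) : Prop :=
  forall B : op R n, is_density B ->
    (forall S, S \in F -> ptrace S B = ptrace S A) -> B = A.

(* L(rho) = min over determining families of the max size of a member.
   (The family {[n]} always determines rho, so the min is over a nonempty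
   set; the default value n is never below the true minimum.) *)
Definition Lval (R : realType) (n : nat) (A : op R n) : nat :=
  \big[minn/n]_(F : {set {set 'I_n}} | `[< determines A F >]) \max_(S in F) #|S|.

Definition weight (n : nat) (x : bits n) : nat := #|[set j | x j]|.

Definition dicke (R : realType) (n i : nat) (x : bits n) : R[i] :=
  if weight x == i then real_complex R ((Num.sqrt ('C(n, i)%:R : R))^-1) else 0.

Definition dicke_mix (R : realType) (n : nat) (lam : 'I_n.+1 -> R) : op R n :=
  fun x y => \sum_(i < n.+1) real_complex R (lam i) * @dicke R n i x * (@dicke R n i y)^*.

Definition binomZ (m : nat) (j : int) : nat :=
  match j with Posz j' => 'C(m, j') | Negz _ => 0%N end.

Definition coef (R : realType) (n k s i : nat) : R :=
  ('C(k, s) * binomZ (n - k) (i%:Z - s%:Z))%:R / ('C(n, i))%:R.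

(* Main.v *)
Require Import Defs.
From HB Require Import structures.
From mathcomp Require Import all_boot all_order all_algebra.
From mathcomp Require Import boolp reals complex.
From mathcomp Require Import ring zify.
Import Order.TTheory GRing.Theory Num.Theory.
Local Open Scope ring_scope.
Set Implicit Arguments. Unset Strict Implicit.



Section Aux.
Variable n : nat.

Definition zS (S : {set 'I_n}) (z : bits n) : bool := [forall i, (i \in S) ==> ~~ z i].
Definition wS (S : {set 'I_n}) (x : bits n) : nat := #|[set j in S | x j]|.

Lemma weight_le (x : bits n) : (weight x <= n)%N.
Proof. by rewrite /weight; apply: leq_trans (max_card _) _; rewrite card_ord. Qed.

Lemma wS_le S (x : bits n) : (wS S x <= #|S|)%N.
Proof. by apply: subset_leq_card; apply/subsetP => j; rewrite inE => /andP[]. Qed.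

Lemma weight_zS S (z : bits n) : zS S z -> (weight z <= #|~: S|)%N.
Proof.
move=> /forallP hz; apply: subset_leq_card; apply/subsetP => j.
rewrite !inE => zj; apply/negP => jS; by move: (hz j); rewrite jS zj.
Qed.

Lemma weight_merge S (x z : bits n) : zS S z ->
  weight (Defs.merge S x z) = (wS S x + weight z)%N.
Proof.
move=> /forallP hz; rewrite /weight /wS.
have -> : [set j | Defs.merge S x z j] = [set j in S | x j] :|: [set j | z j].
  apply/setP => j; rewrite !inE /Defs.merge ffunE.
  case jS: (j \in S) => /=; last by [].
  by move: (hz j); rewrite jS /= => /negbTE ->; rewrite orbF.
rewrite cardsU; suff -> : [set j in S | x j] :&: [set j | z j] = set0 by rewrite cards0 subn0.
apply/setP => j; rewrite !inE; apply/negP => /andP[/andP[jS _] zj].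
by move: (hz j); rewrite jS zj.
Qed.

Lemma count_zS S j :
  #|[set z : bits n | zS S z && (weight z == j)]| = 'C(#|~: S|, j).
Proof.
rewrite -cards_draws.
pose f (z : bits n) : {set 'I_n} := [set i | z i].
have finj : injective f.
  move=> z1 z2; rewrite /f => /setP h; apply/ffunP => i; move: (h i); rewrite !inE.
  by case: (z1 i); case: (z2 i).
rewrite -(card_imset _ finj); apply: eq_card => A; rewrite !inE.
apply/imsetP/andP => [[z] | [sA cA]].
  rewrite inE => /andP[/forallP hz wz] ->; split; last by [].
  apply/subsetP => i; rewrite !inE => zi; apply/negP => iS.
  by move: (hz i); rewrite iS zi.
exists [ffun i => i \in A].
  rewrite inE; apply/andP; split.
    apply/forallP => i; apply/implyP => iS; rewrite ffunE; apply/negP => iA.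
    by move: (subsetP sA i iA); rewrite inE iS.
  rewrite /weight; suff -> : [set j | [ffun i => i \in A] j] = A by [].
  by apply/setP => i; rewrite !inE ffunE.
by apply/setP => i; rewrite !inE ffunE.
Qed.

End Aux.



Lemma binomZ_pascal N d : binomZ N.+1 d = (binomZ N d + binomZ N (d - 1))%N.
Proof.
case: d => [[|d]|d]; first by rewrite (_ : Posz 0 - 1 = Negz 0) //= !bin0.
  by rewrite (_ : (Posz d.+1 - 1) = Posz d) ?binS // -[d.+1]addn1 PoszD addrK.
by rewrite (_ : (Negz d - 1) = Negz d.+1) //; rewrite !NegzE -opprD -PoszD addn1.
Qed.

Lemma binomZ_sub N i t : (t <= i)%N -> binomZ N (i%:Z - t%:Z) = 'C(N, i - t).
Proof. by move=> h; rewrite subzn. Qed.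

Lemma binomZ_neg N i t : (i < t)%N -> binomZ N (i%:Z - t%:Z) = 0%N.
Proof.
move=> h; have [m hm] : exists m, (t - i = m.+1)%N by exists (t - i).-1; lia.
by rewrite (_ : (i%:Z - t%:Z) = Negz m) //; rewrite NegzE; lia.
Qed.

Section Aux2.
Variable n : nat.

Lemma sum_zS (R : realType) (G : nat -> R) (S : {set 'I_n}) t : (t <= #|S|)%N ->
  \sum_(z : bits n | zS S z) G (t + weight z)%N =
  \sum_(i < n.+1) (binomZ (n - #|S|) (i%:Z - t%:Z))%:R * G i.
Proof.
move=> ht.
have step z : zS S z -> G (t + weight z)%N =
    \sum_(i < n.+1) ((t + weight z)%N == i)%:R * G i.
  move=> hz; have hlt : (t + weight z < n.+1)%N.
    have := weight_zS hz; have := cardsC S; rewrite card_ord; lia.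
  rewrite (bigD1 (Ordinal hlt)) //= eqxx mul1r big1 ?addr0 // => i hi.
  case: eqP => [e|_]; last by rewrite mul0r.
  by move: hi; rewrite -val_eqE /= -e eqxx.
rewrite (eq_bigr _ step) exchange_big /=; apply: eq_bigr => i _.
rewrite -mulr_suml; congr (_ * _); rewrite -natr_sum; congr (_%:R).
have hc := cardsC S; rewrite card_ord in hc.
case: (leqP t i) => hti.
  rewrite binomZ_sub // (_ : (n - #|S|)%N = #|~: S|); last by lia.
  rewrite -count_zS -sum1_card big_mkcond /= [RHS]big_mkcond /=.
  apply: eq_bigr => z _; rewrite inE; case: (zS S z) => //=.
  by rewrite (_ : ((t + weight z)%N == i) = (weight z == i - t)%N) //; apply/eqP/eqP; lia.
rewrite binomZ_neg // big1 // => z _.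
by rewrite (_ : ((t + weight z)%N == i) = false) //; apply: negbTE; apply/eqP; lia.
Qed.

End Aux2.



Section Aux3.
Variable R : realType.
Variable n : nat.

Definition gc (c : 'I_n.+1 -> R) (i : nat) : R := c (inord i) / ('C(n, i))%:R.
Definition Fc (c : 'I_n.+1 -> R) (m t : nat) : R :=
  \sum_(i < n.+1) (binomZ (n - m) (i%:Z - t%:Z))%:R * gc c i.

Lemma conj_real (r : R) : (real_complex R r)^* = real_complex R r.
Proof. exact: conjc_real. Qed.

Lemma dm_formula (c : 'I_n.+1 -> R) (x y : bits n) : dicke_mix c x y =
  if weight x == weight y then real_complex R (gc c (weight x)) else 0.
Proof.
have hw : (weight x < n.+1)%N by rewrite ltnS weight_le.
rewrite /dicke_mix (bigD1 (inord (weight x))) //= big1 ?addr0; last first.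
  move=> i hi; rewrite /dicke (_ : (weight x == i) = false) ?mulr0 ?mul0r //.
  apply/negbTE; apply: contra hi => /eqP e; apply/eqP/val_inj.
  by rewrite /= inordK // e.
rewrite /dicke inordK // eqxx [weight y == weight x]eq_sym.
case: eqP => e; last by rewrite conjC0 mulr0.
rewrite conj_real -!rmorphM; congr (real_complex R _).
rewrite /gc -mulrA -expr2 exprVn sqr_sqrtr ?ler0n //.
Qed.

Lemma ptrace_dm (c : 'I_n.+1 -> R) (S : {set 'I_n}) (x y : bits n) :
  ptrace S (dicke_mix c) x y =
  if wS S x == wS S y then real_complex R (Fc c #|S| (wS S x)) else 0.
Proof.
rewrite /ptrace.
under eq_bigr => z hz do rewrite dm_formula !(weight_merge _ hz) eqn_add2r.
have [e|ne] := eqVneq (wS S x) (wS S y); last by rewrite big1.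
rewrite -rmorph_sum; congr (real_complex R _).
by apply: sum_zS; apply: wS_le.
Qed.

Lemma Fc00 (c : 'I_n.+1 -> R) : Fc c 0 0 = \sum_(i < n.+1) c i.
Proof.
apply: eq_bigr => i _; rewrite binomZ_sub // subn0 subn0 /gc inord_val.
rewrite mulrCA divff ?mulr1 // pnatr_eq0 -lt0n bin_gt0 -ltnS //.
Qed.

Lemma trace_ptrace (A : op R n) :
  \sum_(x : bits n) A x x = ptrace set0 A [ffun => false] [ffun => false].
Proof.
rewrite /ptrace; apply: eq_big => [z|z _].
  by apply/esym/forallP => i; rewrite inE.
by congr (A _ _); apply/ffunP => i; rewrite ffunE inE.
Qed.

Lemma wS0 (x : bits n) : wS set0 x = 0%N.
Proof.
rewrite /wS (_ : [set j in set0 | x j] = set0) ?cards0 //.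
by apply/setP => j; rewrite !inE.
Qed.

Lemma trace_dm (c : 'I_n.+1 -> R) : \sum_(x : bits n) dicke_mix c x x = real_complex R (\sum_(i < n.+1) c i).
Proof. by rewrite trace_ptrace ptrace_dm wS0 eqxx cards0 Fc00. Qed.

Lemma herm_dm (c : 'I_n.+1 -> R) (x y : bits n) : dicke_mix c y x = (dicke_mix c x y)^*.
Proof.
rewrite !dm_formula [weight y == weight x]eq_sym.
case: eqP => e; last by rewrite conjC0.
by rewrite conj_real e.
Qed.

Lemma psd_dm (c : 'I_n.+1 -> R) : (forall i, 0 <= c i) -> forall v : bits n -> R[i],
  0 <= \sum_(x : bits n) \sum_(y : bits n) (v x)^* * dicke_mix c x y * v y.
Proof.
move=> hc v.
have -> : \sum_(x : bits n) \sum_(y : bits n) (v x)^* * dicke_mix c x y * v y =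
   \sum_(i < n.+1) real_complex R (c i) *
     ((\sum_(x : bits n) (v x)^* * dicke R i x) * (\sum_(x : bits n) (v x)^* * dicke R i x)^*).
  rewrite exchange_big /=.
  under eq_bigr => y _ do under eq_bigr => x _ do rewrite /dicke_mix mulr_sumr mulr_suml.
  under eq_bigr => y _ do rewrite exchange_big /=.
  rewrite exchange_big /=; apply: eq_bigr => i _.
  rewrite rmorph_sum /= mulr_sumr mulr_sumr; apply: eq_bigr => y _.
  rewrite mulr_suml mulr_sumr; apply: eq_bigr => x _.
  rewrite rmorphM /= conjCK; ring.
apply: sumr_ge0 => i _; apply: mulr_ge0; first by rewrite ler0c.
exact: mul_conjC_ge0.
Qed.

End Aux3.



Lemma Fc_pascal (R : realType) n (c : 'I_n.+1 -> R) m t : (m < n)%N ->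
  Fc c m t = Fc c m.+1 t + Fc c m.+1 t.+1.
Proof.
move=> hm; rewrite /Fc -big_split; apply: eq_bigr => i _ /=.
rewrite (_ : (n - m)%N = (n - m.+1).+1); last by lia.
rewrite binomZ_pascal natrD mulrDl.
by rewrite (_ : i%:Z - t%:Z - 1 = i%:Z - (t.+1)%:Z) // -[t.+1]addn1 PoszD opprD addrA.
Qed.

Lemma ptrace_setT (R : realType) n (A : op R n) x y : ptrace setT A x y = A x y.
Proof.
rewrite /ptrace (big_pred1 [ffun => false]) => [|z].
  by congr (A _ _); apply/ffunP => i; rewrite ffunE in_setT.
rewrite /=; apply/forallP/eqP => [h|->].
  apply/ffunP => i; have := h i; rewrite in_setT ffunE /=; by case: (z i).
by move=> i; rewrite ffunE implybT.
Qed.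

Theorem mainTheorem15 (R : realType) (n k : nat) (lam : 'I_n.+1 -> R) :
  (forall i, 0 <= lam i) ->
  \sum_(i < n.+1) lam i = 1 ->
  (1 <= k)%N -> (k <= n)%N ->
  (exists a : 'I_n.+1 -> R,
      (forall i, 0 <= a i) /\ a <> lam /\
      (forall s : nat, (s <= k)%N ->
         \sum_(i < n.+1) a i * @coef R n k s i
         = \sum_(i < n.+1) lam i * @coef R n k s i)) ->
  (k.+1 <= @Lval R n (@dicke_mix R n lam))%N.
Proof.
move=> hl hs hk1 hkn [a [ha [hne heq]]].
set rho := dicke_mix lam; set sig := dicke_mix a.
have hK : forall s, (s <= k)%N -> Fc a k s = Fc lam k s.
  move=> s hs'; have := heq s hs'.
  have E (c : 'I_n.+1 -> R) : \sum_(i < n.+1) c i * coef R n k s i = 'C(k, s)%:R * Fc c k s.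
    rewrite /Fc mulr_sumr; apply: eq_bigr => i _; rewrite /coef /gc inord_val natrM.
    by rewrite -mulrA mulrCA; congr (_ * _); exact: mulrCA.
  rewrite !E => /(mulfI _); apply; by rewrite pnatr_eq0 -lt0n bin_gt0.
have hdown : forall d, (d <= k)%N -> forall t, (t <= k - d)%N ->
    Fc a (k - d) t = Fc lam (k - d) t.
  elim => [|d IH] hd t ht; first by move: ht; rewrite subn0; apply: hK.
  have e1 : (k - d.+1).+1 = (k - d)%N by lia.
  have hm : (k - d.+1 < n)%N by lia.
  rewrite (Fc_pascal a t hm) (Fc_pascal lam t hm) e1 !IH //; lia.
have hall : forall m t, (m <= k)%N -> (t <= m)%N -> Fc a m t = Fc lam m t.
  move=> m t hm ht; have := hdown (k - m)%N (leq_subr _ _) t.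
  by rewrite subKn //; apply.
have agree : forall S : {set 'I_n}, (#|S| <= k)%N -> ptrace S sig = ptrace S rho.
  move=> S hS; apply/funext => x; apply/funext => y.
  by rewrite !ptrace_dm hall //; apply: wS_le.
have sum_a : \sum_(i < n.+1) a i = 1 by rewrite -Fc00 hall // Fc00.
have dens : is_density sig.
  split; first exact: herm_dm.
  split; first exact: psd_dm.
  by rewrite trace_dm sum_a rmorph1.
have neq : sig <> rho.
  move=> e; apply: hne; apply/funext => i.
  have [x hx] : exists x : bits n, weight x == i.
    have : (0 < #|[set z : bits n | zS set0 z && (weight z == i)]|)%N.
      by rewrite count_zS setC0 cardsT card_ord bin_gt0 -ltnS.
    by case/card_gt0P => x; rewrite inE => /andP[_ h]; exists x.
  have := congr1 (fun A => A x x) e; rewrite /sig /rho /= !dm_formula eqxx => /complexI.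
  rewrite /gc (eqP hx) inord_val => /(congr1 (fun r => r * ('C(n, i))%:R)).
  by rewrite !divfK // pnatr_eq0 -lt0n bin_gt0 -ltnS.
have kn : (k < n)%N.
  rewrite ltn_neqAle hkn andbT; apply/eqP => ekn; apply: neq.
  apply/funext => x; apply/funext => y.
  have := agree setT; rewrite cardsT card_ord ekn leqnn => /(_ isT) h.
  by have := congr1 (fun f => f x y) h; rewrite !ptrace_setT.
rewrite /Lval; apply: (big_ind (fun m => k < m)%N) => //.
  by move=> x y hx hy; rewrite leq_min hx hy.
move=> F /asboolP hF; rewrite ltnNge; apply/negP => hmax.
apply: neq; apply: hF => // S hS; apply: agree; apply: leq_trans hmax.
exact: leq_bigmax_cond.
Qed.
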